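(* Let $G=(V,E)$ be a finite simple graph of order $n$ and let $T=n-1$. If $(x,y,z)$ is an optimal solution of the integer program with the constraints of the Time Step Model $\mathrm{TSM}(G,T)$ and objective ''minimize $\sum_{v\in V}x^0_v+\frac{1}{2T}\sum_{t\in[T]}z^t$'', then $C=\{v\in V\colon x^0_v=1\}$ is a minimum zero forcing set of $G$ with $\mathrm{pt}(G)=\mathrm{pt}(G,C)=\sum_{t\in[T]}z^t$.
   Context: Zero forcing: under the standard color change rule a filled vertex $u$ can force a non-filled vertex $v$ if $v$ is the only non-filled neighbor of $u$; $C\subseteq V$ is a zero forcing set if, starting with $C$ filled and repeatedly forcing, all of $V$ becomes filled; a minimum zero forcing set is one of minimum size. The propagation time $\mathrm{pt}(G,C)$ is the smallest $t^*$ such that, starting from $C^{[0]}=C$ and setting $C^{[t]}=C^{[t-1]}\cup\{v\notin C^{[t-1]}\colon$ some $u\in C^{[t-1]}$ has $v$ as its only neighbor outside $C^{[t-1]}\}$, one has $C^{[t^*]}=V$ ($\infty$ if $C$ is not a zero forcing set). $\mathrm{pt}(G)=\min\{\mathrm{pt}(G,C)\colon C$ a minimum zero forcing set$\}$. $N(u)$ is the neighborhood of $u$ and $d(u)=|N(u)|$. Time Step Model constraints: $A$ is the set of arcs containing $(u,v)$ and $(v,u)$ for each edge $\{u,v\}$, $[T]=\{1,\dots,T\}$. Binary variables $x^t_v$ ($v\in V$, $t\in\{0,\dots,T\}$), $y^t_a$ ($a\in A$, $t\in[T]$), $z^t$ ($t\in[T]$), with constraints: (1) $x^0_v+\sum_{t\in[T]}\sum_{a=(u,v)\in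 A}y^t_a=1$ for all $v$; (2) $y^t_a\leq x^{t-1}_u$ for all $a=(u,v)\in A$, $t\in[T]$; (3) $y^t_a\leq x^{t-1}_w$ for all $a=(u,v)\in A$, $w\in N(u)\setminus\{v\}$, $t\in[T]$; (4) $x^t_v=x^{t-1}_v+\sum_{a=(u,v)\in A}y^t_a$ for all $v$, $t\in[T]$; (5) $x^{t-1}_u-x^{t-1}_v+\sum_{w\in N(u)\setminus\{v\}}x^{t-1}_w\leq\sum_{a=(w,v)\in A}y^t_a+d(u)-1$ for all $(u,v)\in A$, $t\in[T]$; (6) $\frac1n\sum_{v\in V}(x^t_v-x^{t-1}_v)-z^t\leq0$ for all $t\in[T]$; (7) $z^t-\sum_{v\in V}(x^t_v-x^{t-1}_v)\leq 0$ for all $t\in[T]$. *)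

(* Defs.v *)
From HB Require Import structures.
From mathcomp Require Import all_boot all_order all_algebra.
Set Implicit Arguments. Unset Strict Implicit. Unset Printing Implicit Defensive.
Import Order.TTheory GRing.Theory Num.Theory.

Definition simple_graph (V : finType) (e : rel V) : Prop :=
  symmetric e /\ irreflexive e.

Section ZF.
Variables (V : finType) (e : rel V).

Definition nbhd (u : V) : {set V} := [set w | e u w].
Definition deg (u : V) : nat := #|nbhd u|.

Definition force_step (C : {set V}) : {set V} :=
  C :|: [set v | (v \notin C) &&
                 [exists u, (u \in C) && (nbhd u :\: C == [set v])]].

Definition filled (C : {set V}) (t : nat) : {set V} := iter t force_step C.

Definition zero_forcing_set (C : {set V}) : Prop :=
  exists t, filled C t = [set: V].

Definition min_zero_forcing_set (C : {set V}) : Prop :=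
  zero_forcing_set C /\ forall D : {set V}, zero_forcing_set D -> #|C| <= #|D|.

Definition pt_set_is (C : {set V}) (k : nat) : Prop :=
  filled C k = [set: V] /\ forall j, j < k -> filled C j != [set: V].

Definition pt_graph_is (k : nat) : Prop :=
  (exists2 C, min_zero_forcing_set C & pt_set_is C k) /\
  forall C j, min_zero_forcing_set C -> pt_set_is C j -> k <= j.

(* Binary variables: x t v (t = 0..T), y t u v for the arc (u,v) (t = 1..T),
   z t (t = 1..T); values outside these index ranges / non-arcs are unused. *)
Local Open Scope ring_scope.

Definition b2i (b : bool) : int := (nat_of_bool b)%:Z.
Definition b2q (b : bool) : rat := (nat_of_bool b)%:R.

Definition TSM_feasible (T : nat)
    (x : nat -> V -> bool) (y : nat -> V -> V -> bool) (z : nat -> bool) : Prop :=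
  (forall v, (x 0%N v + \sum_(1 <= t < T.+1) \sum_(u | e u v) y t u v = 1)%N) /\
  (forall u v t, e u v -> (1 <= t <= T)%N -> (y t u v <= x t.-1 u)%N) /\
  (forall u v w t, e u v -> w \in nbhd u -> w != v -> (1 <= t <= T)%N ->
      (y t u v <= x t.-1 w)%N) /\
  (forall v t, (1 <= t <= T)%N ->
      (x t v : nat) = (x t.-1 v + \sum_(u | e u v) y t u v)%N) /\
  (forall u v t, e u v -> (1 <= t <= T)%N ->
      b2i (x t.-1 u) - b2i (x t.-1 v) + \sum_(w in nbhd u :\ v) b2i (x t.-1 w)
      <= \sum_(w | e w v) b2i (y t w v) + (deg u)%:Z - 1) /\
  (forall t, (1 <= t <= T)%N ->
      (#|V|%:R)^-1 * \sum_v (b2q (x t v) - b2q (x t.-1 v)) - b2q (z t) <= 0) /\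
  (forall t, (1 <= t <= T)%N ->
      b2q (z t) - \sum_v (b2q (x t v) - b2q (x t.-1 v)) <= 0).

Definition TSM_objective (T : nat)
    (x : nat -> V -> bool) (z : nat -> bool) : rat :=
  \sum_v b2q (x 0%N v) + (2 * T%:R)^-1 * \sum_(1 <= t < T.+1) b2q (z t).

Definition TSM_optimal (T : nat) x y z : Prop :=
  TSM_feasible T x y z /\
  forall x' y' z', TSM_feasible T x' y' z' ->
    TSM_objective T x z <= TSM_objective T x' z'.

End ZF.

(* Main.v *)
Require Import Defs.
From HB Require Import structures.
From mathcomp Require Import all_boot all_order all_algebra zify.
Set Implicit Arguments. Unset Strict Implicit. Unset Printing Implicit Defensive.
Import Order.TTheory GRing.Theory Num.Theory.

Section Proofs.
Variables (V : finType) (e : rel V).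
Local Notation fs := (force_step e).
Local Notation F := (filled e).

Lemma fs_sub (A : {set V}) : A \subset fs A.
Proof. exact: subsetUl. Qed.

Lemma filledS C t : F C t.+1 = fs (F C t).
Proof. by []. Qed.

Lemma filled_mono C s t : (s <= t)%N -> F C s \subset F C t.
Proof.
move=> /subnK <-; elim: (t - s)%N => [|k IH]; first by rewrite add0n.
by rewrite addSn filledS (subset_trans IH) ?fs_sub.
Qed.

Lemma filled_fix C t k : F C t.+1 = F C t -> F C (k + t) = F C t.
Proof. by move=> H; elim: k => [|k IH] //; rewrite addSn filledS IH. Qed.

Lemma fsT : fs setT = setT.
Proof. by apply/setP => v; rewrite !inE. Qed.

Lemma filled_setT C t k : F C t = setT -> F C (k + t) = setT.
Proof. by move=> H; elim: k => [|k IH] //; rewrite addSn filledS IH fsT. Qed.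

Lemma filled_setT' C t s : F C t = setT -> (t <= s)%N -> F C s = setT.
Proof. by move=> H /subnK <-; apply: filled_setT. Qed.

Lemma filled0 C t : C = set0 -> F C t = set0.
Proof.
move=> ->; elim: t => [|t IH] //; rewrite filledS IH.
apply/setP => v; rewrite !inE /=; apply/existsP => -[u]; by rewrite inE.
Qed.

Lemma zfs_bound C : zero_forcing_set e C -> F C #|V|.-1 = setT.
Proof.
move=> HZ.
have HZ' : exists t, F C t == setT by case: HZ => t Ht; exists t; apply/eqP.
case: (ex_minnP HZ') => j /eqP Fj jmin.
have step k : (k < j)%N -> F C k \proper F C k.+1.
  move=> kj; rewrite properEneq filled_mono // andbT; apply/negP => /eqP Hk.
  have : F C j = F C k.
    have -> : j = ((j - k) + k)%N by rewrite subnK // ltnW.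
    by apply: filled_fix.
  rewrite Fj => /esym/eqP /jmin; by rewrite leqNgt kj.
have card k : (k <= j)%N -> (#|C| + k <= #|F C k|)%N.
  elim: k => [|k IH] kj; first by rewrite addn0.
  have := proper_card (step k kj); have := IH (ltnW kj); lia.
case: j Fj jmin step card => [|j] Fj jmin step card.
  by apply: (filled_setT' Fj).
have Cn : C != set0.
  apply/eqP => C0; have := filled0 j.+1 C0; rewrite Fj => HT.
  have : F C 0 == setT by rewrite /= C0 -HT.
  by move/jmin.
have nT : F C j != setT by apply/negP => /jmin; rewrite ltnn.
have := proper_card (etrans (properT _) nT); rewrite cardsT.
have := card j (leqnSn j).
have : (0 < #|C|)%N by rewrite card_gt0.
move=> h1 h2 h3.
apply: (filled_setT' Fj); lia.
Qed.

Local Notation T := (#|V|.-1).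
Definition cnt C := (\sum_(1 <= t < T.+1) (F C t != F C t.-1))%N.

Lemma sum_le (j n : nat) : (\sum_(1 <= t < n.+1) (t <= j) = minn n j)%N.
Proof.
elim: n => [|n IH]; first by rewrite big_geq // min0n.
rewrite big_nat_recr //= IH; case: (leqP n.+1 j) => H /=; lia.
Qed.

Lemma pt_ex C : F C T = setT -> exists j, pt_set_is e C j.
Proof.
move=> HT.
have HZ' : exists t, F C t == setT by exists T; apply/eqP.
case: (ex_minnP HZ') => j /eqP Fj jmin; exists j; split => // k kj.
by apply/negP => /jmin; rewrite leqNgt kj.
Qed.

Lemma pt_cnt C j : F C T = setT -> pt_set_is e C j -> cnt C = j.
Proof.
move=> HT [Fj jmin].
have jT : (j <= T)%N by rewrite leqNgt; apply/negP => /jmin; rewrite HT eqxx.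
rewrite /cnt -[RHS](minn_idPr jT) -sum_le.
apply: eq_big_nat => t /andP[t1 tT].
case: (leqP t j) => tj /=.
  suff -> : F C t != F C t.-1 by []. apply/negP => /eqP Ht.
  have Ht' : F C t.-1.+1 = F C t.-1 by rewrite prednK.
  have := filled_fix (j - t.-1) Ht'; rewrite subnK; last by lia.
  rewrite Fj => /esym Hb. have tj1 : (t.-1 < j)%N by rewrite -subn1; lia. by have := jmin t.-1 tj1; rewrite Hb eqxx.
have h1 : (j <= t)%N by lia.
have h2 : (j <= t.-1)%N by rewrite -subn1; lia.
by rewrite (filled_setT' Fj h1) (filled_setT' Fj h2) eqxx.
Qed.


Lemma tele (g : nat -> nat) (x : nat -> bool) n :
  (forall t, (1 <= t <= n)%N -> (x t : nat) = (x t.-1 + g t)%N) ->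
  forall t, (t <= n)%N -> (x t : nat) = (x 0%N + \sum_(1 <= s < t.+1) g s)%N.
Proof.
move=> H; elim => [|t IH] tn; first by rewrite big_geq // addn0.
rewrite big_nat_recr //= addnA -IH ?(ltnW tn) //; apply: (H t.+1); lia.
Qed.

Lemma sum_nat_card (A : {set V}) (f : V -> bool) :
  (\sum_(w in A) (f w : nat))%N = #|[set w in A | f w]|.
Proof.
rewrite -sum1dep_card big_mkcondr /=; apply: eq_bigr => w _; by case: (f w).
Qed.

Local Open Scope ring_scope.

Lemma sum_b2i (A : {set V}) (f : V -> bool) :
  \sum_(w in A) b2i (f w) = #|[set w in A | f w]|%:Z.
Proof.
rewrite -sum_nat_card -natz natr_sum; apply: eq_bigr => w _; by rewrite natz.
Qed.

Lemma sum_b2i' (P : pred V) (f : V -> bool) :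
  \sum_(w | P w) b2i (f w) = (\sum_(w | P w) (f w : nat))%N%:Z.
Proof. rewrite -natz natr_sum; apply: eq_bigr => w _; by rewrite natz. Qed.

Lemma sum_b2q (B : {set V}) : \sum_v b2q (v \in B) = #|B|%:R.
Proof.
rewrite /b2q -natr_sum; congr (_%:R); rewrite -sum1_card [RHS]big_mkcond /=.
by apply: eq_bigr => w _; case: (w \in B).
Qed.

Lemma sum_b2q_diff (A B : {set V}) : A \subset B ->
  \sum_v (b2q (v \in B) - b2q (v \in A)) = (#|B| - #|A|)%N%:R.
Proof.
move=> AB; rewrite sumrB !sum_b2q natrB //; exact: subset_leq_card.
Qed.

Lemma L5 (u v : V) (f : V -> bool) : e u v ->
  let lhs := b2i (f u) - b2i (f v) + \sum_(w in nbhd e u :\ v) b2i (f w) in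
  (f u && ~~ f v && (nbhd e u :\: [set w | f w] == [set v]) -> lhs = (deg e u)%:Z) /\
  (~~ (f u && ~~ f v && (nbhd e u :\: [set w | f w] == [set v])) ->
     lhs <= (deg e u)%:Z - 1).
Proof.
move=> euv lhs.
have vN : v \in nbhd e u by rewrite inE.
have dc : deg e u = (#|nbhd e u :\ v| + 1)%N by rewrite /deg (cardsD1 v) vN addnC.
rewrite /lhs sum_b2i.
set S := [set w in nbhd e u :\ v | f w].
have Ssub : S \subset nbhd e u :\ v by apply/subsetP => w; rewrite inE => /andP[].
have Sle := subset_leq_card Ssub.
have key : ~~ f v -> (nbhd e u :\: [set w | f w] == [set v]) = (S == nbhd e u :\ v).
  move=> nfv; apply/eqP/eqP => H.
    apply/setP => w; rewrite !inE; case: (boolP (w == v)) => //= wv.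
    case: (boolP (e u w)) => //= euw; apply/negPn/negP => nfw.
    have : w \in nbhd e u :\: [set w | f w] by rewrite !inE euw nfw.
    by rewrite H inE (negPf wv).
  apply/setP => w; rewrite !inE; case: (boolP (w == v)) => [/eqP -> | wv] /=.
    by rewrite euv nfv.
  apply/negP => /andP[nfw euw].
  have : w \in S by rewrite H !inE wv euw.
  by rewrite !inE (negPf nfw) andbF.
split.
  case/andP => /andP[fu nfv]; rewrite key // => /eqP ->.
  rewrite fu (negPf nfv) /b2i /= dc; lia.
case: (boolP (f u)) => fu; case: (boolP (f v)) => fv /=; rewrite /b2i /= dc;
  try lia.
rewrite key // => neq.
have := proper_card (_ : S \proper nbhd e u :\ v).
  rewrite properEneq neq Ssub => /(_ isT); lia.
Qed.


Lemma set_in (A : {set V}) : [set w | w \in A] = A.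
Proof. by apply/setP => w; rewrite inE. Qed.

Lemma feas_filled x y z : TSM_feasible e T x y z ->
  forall t, (t <= T)%N -> [set v | x t v] = F [set v | x 0%N v] t.
Proof.
case=> h1 [h2 [h3 [h4 [h5 [h6 h7]]]]].
elim => [|t IH] tT; first by [].
have tT' : (1 <= t.+1 <= T)%N by rewrite tT.
rewrite filledS -IH ?(ltnW tT) //.
apply/setP => v; apply/idP/idP.
  rewrite inE => xv; have H4 := h4 v t.+1 tT'; rewrite /= xv in H4.
  rewrite /force_step !inE; case: (boolP (x t v)) => //= xt.
  rewrite (negPf xt) /= in H4.
  have [/existsP [u /andP[euv yuv]] | none] := boolP [exists u, e u v && y t.+1 u v].
    apply/existsP; exists u; rewrite inE.
    have := h2 u v t.+1 euv tT'; rewrite yuv /=; case: (x t u) => //= _.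
    apply/eqP/setP => w; rewrite !inE.
    case: (eqVneq w v) => [-> | wv]; first by rewrite xt euv.
    case: (boolP (e u w)) => euw; last by rewrite andbF.
    have := h3 u v w t.+1 euv; rewrite inE euw wv => /(_ isT isT tT').
    by rewrite yuv /=; case: (x t w).
  exfalso; move: H4; rewrite big1 // => u euv.
  by apply/eqP; rewrite eqb0; apply: contra none => yuv; apply/existsP; exists u; rewrite euv.
rewrite /force_step !inE; have H4 := h4 v t.+1 tT'; rewrite /= in H4.
case/orP => [xt | /andP[nxt /existsP [u /andP[xu /eqP Heq]]]].
  by move: H4; rewrite xt; case: (x t.+1 v).
have euv : e u v.
  have : v \in nbhd e u :\: [set w | x t w] by rewrite Heq set11.
  by rewrite !inE => /andP[].
have := (L5 (x t) euv).1; rewrite inE in xu; rewrite xu nxt Heq eqxx => /(_ isT) Hl.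
rewrite (negPf nxt) in Hl.
have := h5 u v t.+1 euv tT'; rewrite /= xu (negPf nxt) Hl sum_b2i' => Hs.
move: H4; rewrite (negPf nxt) /=; case: (x t.+1 v) => //; lia.
Qed.


Lemma feas_T x y z : TSM_feasible e T x y z -> F [set v | x 0%N v] T = setT.
Proof.
move=> Hf; rewrite -(feas_filled Hf) //; apply/setP => v; rewrite !inE.
case: Hf => h1 [_ [_ [h4 _]]].
have := @tele (fun t => \sum_(u | e u v) y t u v)%N (fun t => x t v) T
  (fun t tT => h4 v t tT) T (leqnn _).
rewrite h1; by case: (x T v).
Qed.

Lemma card_diff_eq (A B : {set V}) : A \subset B ->
  (A != B) = (0 < #|B| - #|A|)%N.
Proof.
move=> AB; have [le E] := subset_leqif_cards AB; rewrite -E subn_gt0 ltn_neqAle le andbT //.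
Qed.

Lemma feas_z x y z : TSM_feasible e T x y z ->
  forall t, (1 <= t <= T)%N ->
    z t = (F [set v | x 0%N v] t != F [set v | x 0%N v] t.-1).
Proof.
move=> Hf t /andP[t1 tT].
have Ex s : (s <= T)%N -> forall v, x s v = (v \in F [set v | x 0%N v] s).
  by move=> sT v; rewrite -(feas_filled Hf) // inE.
case: Hf => _ [_ [_ [_ [_ [h6 h7]]]]].
have tT' : (1 <= t <= T)%N by rewrite t1 tT.
have := h6 t tT'; have := h7 t tT'.
set C := [set v | x 0%N v].
rewrite (eq_bigr (fun v => b2q (v \in F C t) - b2q (v \in F C t.-1))); last first.
  move=> v _; rewrite -!Ex //; apply: leq_trans tT; exact: leq_pred.
have Fsub : F C t.-1 \subset F C t by apply: filled_mono; exact: leq_pred.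
rewrite sum_b2q_diff // eq_sym card_diff_eq //.
set k := (#|F C t| - #|F C t.-1|)%N.
have n0 : (0 < #|V|)%N by lia.
case: (z t) => /=; rewrite /b2q /=.
  rewrite subr_le0 (ler_nat _ 1 k) => k1 _; by [].
move=> _; rewrite subr0 pmulr_rle0 ?invr_gt0 ?ltr0n // (ler_nat _ k 0) => k0.
by move: k0; rewrite leqn0 => /eqP ->.
Qed.


Definition xD D t v := v \in F D t.
Definition zD D t := F D t != F D t.-1.
Definition yD D t u v :=
  (v \notin F D t.-1) &&
  ([pick w | (w \in F D t.-1) && (nbhd e w :\: F D t.-1 == [set v])] == Some u).

Lemma ysum D t v : (1 <= t)%N ->
  (\sum_(u | e u v) yD D t u v)%N = ((v \in F D t) && (v \notin F D t.-1)).
Proof.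
move=> t1; have Ft : F D t = fs (F D t.-1) by rewrite -filledS prednK.
rewrite Ft /force_step /yD; case: pickP => [w /andP[wF /eqP Hw] | none].
  have ewv : e w v.
    have : v \in nbhd e w :\: F D t.-1 by rewrite Hw set11.
    by rewrite !inE => /andP[].
  case: (boolP (v \in F D t.-1)) => vF /=.
    by rewrite big1 ?andbF.
  rewrite !inE (negPf vF) /=.
  have -> : [exists u, (u \in F D t.-1) && (nbhd e u :\: F D t.-1 == [set v])].
    by apply/existsP; exists w; rewrite wF Hw eqxx.
  rewrite (bigD1 w) //= eqxx big1 // => u /andP[_ uw].
  by case: eqP => // -[wu]; rewrite wu eqxx in uw.
rewrite big1 ?andbF //.
rewrite !inE.
have -> : [exists u, (u \in F D t.-1) && (nbhd e u :\: F D t.-1 == [set v])] = false.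
  by apply/negbTE/existsP => -[u]; rewrite none.
  by rewrite andbF orbF; case: (v \in F D t.-1).
by move=> u _ /=; rewrite andbF.
Qed.

Lemma yD_spec D t u v : yD D t u v ->
  (u \in F D t.-1) && (nbhd e u :\: F D t.-1 == [set v]).
Proof.
by rewrite /yD; case: pickP => [w Hw | _] /andP[_ /eqP] // [<-].
Qed.


Lemma feasD D : F D T = setT -> TSM_feasible e T (xD D) (yD D) (zD D).
Proof.
move=> HT.
have h4 : forall v t, (1 <= t <= T)%N ->
    (xD D t v : nat) = (xD D t.-1 v + \sum_(u | e u v) yD D t u v)%N.
  move=> v t /andP[t1 _]; rewrite ysum // /xD.
  have := subsetP (filled_mono D (leq_pred t)) v.
  by case: (v \in F D t.-1); case: (v \in F D t) => // ->.
split.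
  move=> v; have := @tele (fun t => \sum_(u | e u v) yD D t u v)%N (fun t => xD D t v) T
    (fun t tT => h4 v t tT) T (leqnn _).
  by rewrite /= {1}/xD HT inE => <-.
split.
  move=> u v t _ _; case Hy: (yD D t u v) => //.
  by rewrite /xD; have /andP[-> _] := yD_spec Hy.
split.
  move=> u v w t _ wN wv _; case Hy: (yD D t u v) => //.
  have /andP[_ /eqP Hn] := yD_spec Hy.
  rewrite /xD; case: (boolP (w \in F D t.-1)) => // wF; exfalso.
  have : w \in nbhd e u :\: F D t.-1 by rewrite inE wF wN.
  by rewrite Hn inE (negPf wv).
split; first exact: h4.
split.
  move=> u v t euv /andP[t1 _].
  have [Ha Hb] := L5 (xD D t.-1) euv.
  rewrite (sum_b2i' (fun w => e w v) (fun w => yD D t w v)).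
  have Hset : [set w | xD D t.-1 w] = F D t.-1 by apply/setP => w; rewrite inE.
  rewrite Hset in Ha Hb.
  case: (boolP [&& xD D t.-1 u, ~~ xD D t.-1 v & nbhd e u :\: F D t.-1 == [set v]]) => H.
    have H' : (xD D t.-1 u && ~~ xD D t.-1 v && (nbhd e u :\: F D t.-1 == [set v]))
      by move: H => /and3P[-> -> ->].
    rewrite (Ha H') ysum //.
    move: H => /and3P[xu nxv Hn].
    have -> : v \in F D t.
      rewrite -(prednK t1) filledS /force_step !inE.
      apply/orP; right; rewrite nxv /=; apply/existsP; exists u; by rewrite -/(xD D t.-1 u) xu Hn.
    rewrite /xD in nxv; rewrite nxv /=; lia.
  have H' : ~~ (xD D t.-1 u && ~~ xD D t.-1 v && (nbhd e u :\: F D t.-1 == [set v])).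
    by apply: contra H => /andP[/andP[-> ->] ->].
  have := Hb H'; lia.
have n0 : forall t, (1 <= t <= T)%N -> (0 < #|V|)%N by move=> t; lia.
have Fsub : forall t, F D t.-1 \subset F D t by move=> t; apply: filled_mono; exact: leq_pred.
split.
  move=> t tT; rewrite /xD sum_b2q_diff // /zD eq_sym card_diff_eq //.
  case: (leqP (#|F D t| - #|F D t.-1|) 0) => hk /=; rewrite /b2q /=.
    move: hk; rewrite leqn0 => /eqP ->. by rewrite mulr0 subr0.
  have nz : (#|V|%:R != 0 :> rat) by rewrite pnatr_eq0 -lt0n (n0 t).
  have kn : (#|F D t| - #|F D t.-1| <= #|V|)%N.
    have := subset_leq_card (subsetT (F D t)); rewrite cardsT; lia.
  have := ler_wpM2l (_ : 0 <= (#|V|%:R : rat)^-1) (_ : (#|F D t| - #|F D t.-1|)%:R <= #|V|%:R).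
  rewrite mulVf // => /(_ _ _) H; rewrite subr_le0; apply: H.
    by rewrite invr_ge0 ler0n.
  by rewrite ler_nat.
move=> t tT; rewrite /xD sum_b2q_diff // /zD eq_sym card_diff_eq //.
case: (leqP (#|F D t| - #|F D t.-1|) 0) => hk /=; rewrite /b2q /=.
  by rewrite subr_le0 ler0n.
by rewrite subr_le0 (ler_nat _ 1).
Qed.

Lemma objD D : TSM_objective T (xD D) (zD D) =
  #|D|%:R + (2 * T%:R)^-1 * (cnt D)%:R.
Proof.
rewrite /TSM_objective /xD /= sum_b2q /cnt natr_sum.
by congr (_ + _ * _); apply: eq_bigr.
Qed.


Lemma sum_bool_le n (f : nat -> bool) : (\sum_(1 <= t < n.+1) f t <= n)%N.
Proof.
elim: n => [|n IH]; first by rewrite big_geq.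
rewrite big_nat_recr //=; have := IH; case: (f n.+1); lia.
Qed.

Lemma arith (a b s k n : nat) : (s <= n)%N -> (k <= n)%N ->
  (a%:R + (2 * n%:R)^-1 * s%:R <= b%:R + (2 * n%:R)^-1 * k%:R :> rat) ->
  (a <= b)%N /\ (a = b -> s <= k)%N.
Proof.
move=> sn kn.
case: n sn kn => [|n] sn kn.
  rewrite mulr0 invr0 !mul0r !addr0 ler_nat => ab; split => // _; lia.
set c := (2 * n.+1%:R : rat).
have c0 : 0 < c by rewrite /c mulr_gt0 // ltr0n.
rewrite -(ler_pM2l c0) !mulrDr !mulrA mulfV ?gt_eqF // !mul1r.
rewrite /c -!natrM -!natrD ler_nat => H.
split; first nia.
move=> ab; rewrite ab in H; lia.
Qed.

End Proofs.

Theorem corollary4p5 (V : finType) (e : rel V) (He : simple_graph e)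
    (x : nat -> V -> bool) (y : nat -> V -> V -> bool) (z : nat -> bool) :
  TSM_optimal e #|V|.-1 x y z ->
  let C := [set v | x 0%N v] in
  let s := (\sum_(1 <= t < #|V|.-1.+1) z t)%N in
  [/\ min_zero_forcing_set e C, pt_graph_is e s & pt_set_is e C s].
Proof.
move=> [Hf Hopt] C s.
have HT := feas_T Hf.
have hs : s = cnt e C.
  by apply: eq_big_nat => t tT; rewrite (feas_z Hf tT).
have objC : TSM_objective #|V|.-1 x z =
    (#|C|%:R + (2 * (#|V|.-1)%:R)^-1 * (cnt e C)%:R :> rat)%R.
  rewrite /TSM_objective (eq_bigr (fun v => b2q (v \in C))); last by move=> v _; rewrite inE.
  by rewrite sum_b2q -hs natr_sum.
have cmp D : zero_forcing_set e D ->
    (#|C| <= #|D|)%N /\ (#|C| = #|D| -> cnt e C <= cnt e D)%N.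
  move=> HD; have := Hopt _ _ _ (feasD (zfs_bound HD)).
  rewrite objC objD; apply: arith; exact: sum_bool_le.
have ZC : zero_forcing_set e C by exists #|V|.-1.
have minC : min_zero_forcing_set e C.
  by split => // D HD; case: (cmp D HD).
have ptC : pt_set_is e C s.
  by have [j Hj] := pt_ex HT; rewrite hs (pt_cnt HT Hj).
split => //; split; first by exists C.
move=> C' j [ZC' minC'] Hj.
rewrite -(pt_cnt (zfs_bound ZC') Hj) hs.
case: (cmp C' ZC') => le1 le2; apply: le2.
by apply/eqP; rewrite eqn_leq le1 minC'.
Qed.
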